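(* For every $\varepsilon>0$ there exists $d_0$ such that for every integer $d\ge d_0$ and every triangle-free graph $G$ on $n$ vertices with maximum degree $d$, \[ \frac{1}{|\mathcal I(G)|}\sum_{I\in\mathcal I(G)}|I| \;\ge\; (1-\varepsilon)\,\frac{\log d}{d}\,n. \] (Equivalently, the average size of an independent set of $G$ is at least $(1+o_d(1))\frac{\log d}{d}n$.)
   Context: $\mathcal I(G)$ denotes the set of all independent sets of $G$ (including the empty set). Logarithms are natural. $o_d(1)$ denotes a quantity tending to $0$ as $d\to\infty$, uniformly over all graphs in question. *)

(* Defs.v *)
From Stdlib Require Import Reals Lra Lia List Bool Arith.
Import ListNotations.
Open Scope R_scope.

(* A simple graph on vertex set {0,...,n-1} given by a boolean adjacency
   relation (values outside {0..n-1} are irrelevant). *)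
Definition is_simple_graph (n : nat) (adj : nat -> nat -> bool) : Prop :=
  (forall i j, (i < n)%nat -> (j < n)%nat -> adj i j = adj j i) /\
  (forall i, (i < n)%nat -> adj i i = false).

Definition triangle_free (n : nat) (adj : nat -> nat -> bool) : Prop :=
  forall i j k, (i < n)%nat -> (j < n)%nat -> (k < n)%nat ->
    ~ (adj i j = true /\ adj j k = true /\ adj i k = true).

Definition degree (n : nat) (adj : nat -> nat -> bool) (v : nat) : nat :=
  length (filter (fun u => adj v u) (seq 0 n)).

Definition max_degree (n : nat) (adj : nat -> nat -> bool) (d : nat) : Prop :=
  (forall v, (v < n)%nat -> (degree n adj v <= d)%nat) /\
  (exists v, (v < n)%nat /\ degree n adj v = d).

(* All subsets of {0..n-1}, encoded as bool lists of length n
   (entry i is true iff vertex i is in the subset). *)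
Fixpoint all_subsets (n : nat) : list (list bool) :=
  match n with
  | O => [[]]
  | S m => map (cons false) (all_subsets m) ++ map (cons true) (all_subsets m)
  end.

Definition independentb (n : nat) (adj : nat -> nat -> bool) (s : list bool) : bool :=
  forallb (fun i => forallb (fun j =>
     negb (nth i s false && nth j s false && adj i j)) (seq 0 n)) (seq 0 n).

(* I(G): the list of all independent sets (each subset exactly once,
   including the empty set). *)
Definition indep_sets (n : nat) (adj : nat -> nat -> bool) : list (list bool) :=
  filter (independentb n adj) (all_subsets n).

Definition set_size (s : list bool) : nat := count_occ Bool.bool_dec s true.

Definition avg_indep_size (n : nat) (adj : nat -> nat -> bool) : R :=
  INR (fold_right Nat.add 0%nat (map set_size (indep_sets n adj)))
  / INR (length (indep_sets n adj)).

(* Main.v *)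
Require Import Defs.
From Stdlib Require Import Reals Lra Lia List Bool Arith FunctionalExtensionality.
Import ListNotations.
Open Scope R_scope.


Fixpoint lsum {A} (l : list A) (f : A -> R) : R :=
  match l with [] => 0 | x :: l' => f x + lsum l' f end.

Lemma lsum_app {A} (l1 l2 : list A) f : lsum (l1 ++ l2) f = lsum l1 f + lsum l2 f.
Proof. induction l1; simpl; [lra| rewrite IHl1; lra]. Qed.
Lemma lsum_map {A B} (g : A -> B) l f : lsum (map g l) f = lsum l (fun x => f (g x)).
Proof. induction l; simpl; congruence. Qed.
Lemma lsum_ext_in {A} (l : list A) f g : (forall x, In x l -> f x = g x) -> lsum l f = lsum l g.
Proof. induction l; simpl; intros H; auto. rewrite H, IHl; auto. Qed.
Lemma lsum_plus {A} l (f g : A -> R) : lsum l (fun x => f x + g x) = lsum l f + lsum l g.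
Proof. induction l; simpl; lra. Qed.
Lemma lsum_scal {A} l (f : A -> R) c : lsum l (fun x => c * f x) = c * lsum l f.
Proof. induction l; simpl; lra. Qed.
Lemma lsum_zero {A} (l : list A) : lsum l (fun _ => 0) = 0.
Proof. induction l; simpl; lra. Qed.
Lemma lsum_le {A} l (f g : A -> R) : (forall x, In x l -> f x <= g x) -> lsum l f <= lsum l g.
Proof. induction l; simpl; intros H; [lra|]. pose proof (H a (or_introl eq_refl)).
 pose proof (IHl (fun x Hx => H x (or_intror Hx))). lra. Qed.
Lemma lsum_swap {A B} (l1 : list A) (l2 : list B) (f : A -> B -> R) :
  lsum l1 (fun x => lsum l2 (fun y => f x y)) = lsum l2 (fun y => lsum l1 (fun x => f x y)).
Proof. induction l1; simpl. - rewrite lsum_zero; auto.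
 - rewrite IHl1, <- lsum_plus. reflexivity. Qed.
Lemma lsum_ge_elem {A} (l : list A) f x : (forall y, In y l -> 0 <= f y) -> In x l -> f x <= lsum l f.
Proof. induction l; simpl; intros H Hx; [contradiction|].
 assert (0 <= lsum l f). { rewrite <- (lsum_zero l). apply lsum_le. intros; apply H; auto. }
 destruct Hx as [->|Hx]. - pose proof (H x (or_introl eq_refl)); lra.
 - pose proof (H a (or_introl eq_refl)). pose proof (IHl (fun y Hy => H y (or_intror Hy)) Hx). lra. Qed.
Lemma lsum_mul {A} (l : list A) f g : lsum l f * lsum l g = lsum l (fun x => lsum l (fun y => f x * g y)).
Proof. rewrite <- (Rmult_comm (lsum l g)), <- lsum_scal. apply lsum_ext_in. intros x _.
 rewrite Rmult_comm, <- lsum_scal. reflexivity. Qed.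

Definition SumS n (f : list bool -> R) := lsum (all_subsets n) f.
Lemma SumS_S n f : SumS (S n) f = SumS n (fun s => f (false :: s)) + SumS n (fun s => f (true :: s)).
Proof. unfold SumS; simpl. rewrite lsum_app, !lsum_map. reflexivity. Qed.
Lemma SumS_0 f : SumS 0 f = f [].
Proof. unfold SumS; simpl; lra. Qed.
Lemma SumS_ext n f g : (forall s, f s = g s) -> SumS n f = SumS n g.
Proof. intros H; apply lsum_ext_in; auto. Qed.
Lemma SumS_plus n f g : SumS n (fun s => f s + g s) = SumS n f + SumS n g.
Proof. apply lsum_plus. Qed.
Lemma SumS_scal n f c : SumS n (fun s => c * f s) = c * SumS n f.
Proof. apply lsum_scal. Qed.
Lemma SumS_zero n : SumS n (fun _ => 0) = 0.
Proof. apply lsum_zero. Qed.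

Definition cnt (n : nat) (P : nat -> bool) : nat := length (filter P (seq 0 n)).
Lemma filter_map_S l P : length (filter P (map S l)) = length (filter (fun i => P (S i)) l).
Proof. induction l; simpl; auto. destruct (P (S a)); simpl; auto. Qed.
Lemma cnt_S n P : cnt (S n) P = ((if P 0%nat then 1 else 0) + cnt n (fun i => P (S i)))%nat.
Proof. unfold cnt. simpl. rewrite <- seq_shift. destruct (P 0%nat); simpl; rewrite filter_map_S; reflexivity. Qed.
Lemma cnt_0 P : cnt 0 P = 0%nat.
Proof. reflexivity. Qed.
Lemma cnt_ext n P Q : (forall i, (i < n)%nat -> P i = Q i) -> cnt n P = cnt n Q.
Proof. revert P Q; induction n; intros P Q H; auto. rewrite !cnt_S. rewrite (H 0%nat) by lia.
 rewrite (IHn (fun i => P (S i)) (fun i => Q (S i))); auto. intros; apply H; lia. Qed.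
Lemma cnt_false n : cnt n (fun _ => false) = 0%nat.
Proof. induction n; auto. rewrite cnt_S; auto. Qed.
Lemma cnt_or n P Q : (forall i, (i < n)%nat -> P i && Q i = false) ->
  cnt n (fun i => P i || Q i) = (cnt n P + cnt n Q)%nat.
Proof. revert P Q; induction n; intros P Q H; auto. rewrite !cnt_S.
 rewrite (IHn (fun i => P (S i)) (fun i => Q (S i))) by (intros; apply H; lia).
 pose proof (H 0%nat ltac:(lia)). destruct (P 0%nat), (Q 0%nat); simpl in *; try discriminate; lia. Qed.
Lemma cnt_single n P v : (v < n)%nat -> cnt n (fun i => P i && (i =? v)%nat) = if P v then 1%nat else 0%nat.
Proof. revert P v; induction n; intros P v Hv; [lia|]. rewrite cnt_S.
 destruct v as [|v].
 - rewrite (cnt_ext _ _ (fun _ => false)) by (intros; destruct (P (S i)); auto).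
   rewrite cnt_false. destruct (P 0%nat); auto.
 - rewrite (cnt_ext n _ (fun i => P (S i) && (i =? v)%nat)) by (intros; reflexivity).
   rewrite (IHn (fun i => P (S i)) v) by lia. simpl. rewrite andb_false_r. auto. Qed.
Lemma cnt_INR n P : INR (cnt n P) = lsum (seq 0 n) (fun i => if P i then 1 else 0).
Proof. unfold cnt. induction (seq 0 n); simpl; [auto|]. destruct (P a); simpl length;
 [rewrite S_INR, IHl; lra | rewrite IHl; lra]. Qed.
Lemma cnt_le n P : (cnt n P <= n)%nat.
Proof. unfold cnt. rewrite <- (length_seq n 0) at 2. apply filter_length_le. Qed.


Definition subb n (t : list bool) (A : nat -> bool) : bool :=
  forallb (fun i => implb (nth i t false) (A i)) (seq 0 n).
Lemma forallb_map_S (f : nat -> bool) l : forallb f (map S l) = forallb (fun i => f (S i)) l.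
Proof. induction l; simpl; congruence. Qed.
Lemma subb_S n b t A : subb (S n) (b :: t) A = implb b (A 0%nat) && subb n t (fun i => A (S i)).
Proof. unfold subb. simpl. rewrite <- seq_shift, forallb_map_S. reflexivity. Qed.
Lemma subb_0 t A : subb 0 t A = true.
Proof. reflexivity. Qed.
Lemma subb_spec n t A : subb n t A = true <-> (forall i, (i < n)%nat -> nth i t false = true -> A i = true).
Proof. unfold subb. rewrite forallb_forall. split.
 - intros H i Hi Ht. specialize (H i). rewrite in_seq in H. specialize (H ltac:(lia)). rewrite Ht in H. exact H.
 - intros H i Hi. rewrite in_seq in Hi. destruct (nth i t false) eqn:E; simpl; auto. apply H; auto; lia. Qed.

Definition sz n (t : list bool) : nat := cnt n (fun i => nth i t false).
Lemma sz_S n b t : sz (S n) (b :: t) = ((if b then 1 else 0) + sz n t)%nat.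
Proof. unfold sz. rewrite cnt_S. reflexivity. Qed.

Section Lam.
Variable lam : R.

Lemma S0 n A : SumS n (fun t => if subb n t A then lam ^ sz n t else 0) = (1 + lam) ^ (cnt n A).
Proof. revert A; induction n; intros A.
 - rewrite SumS_0. reflexivity.
 - rewrite SumS_S, cnt_S.
   rewrite (SumS_ext n _ (fun t => if subb n t (fun i => A (S i)) then lam ^ sz n t else 0))
     by (intros s; rewrite subb_S, sz_S; reflexivity).
   rewrite IHn. destruct (A 0%nat) eqn:EA.
   + rewrite (SumS_ext n _ (fun t => lam * (if subb n t (fun i => A (S i)) then lam ^ sz n t else 0)))
      by (intros s; rewrite subb_S, sz_S, EA; simpl; destruct (subb _ _ _); simpl; lra).
     rewrite SumS_scal, IHn. simpl. lra.
   + rewrite (SumS_ext n _ (fun t => 0)) by (intros s; rewrite subb_S, EA; reflexivity).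
     rewrite SumS_zero. simpl. lra. Qed.

Lemma S1 n A B : (1 + lam) * SumS n (fun t => if subb n t A then INR (cnt n (fun i => nth i t false && B i)) * lam ^ sz n t else 0)
  = INR (cnt n (fun i => A i && B i)) * lam * (1 + lam) ^ (cnt n A).
Proof. revert A B; induction n; intros A B.
 - rewrite SumS_0. simpl. lra.
 - rewrite SumS_S, !cnt_S.
   rewrite (SumS_ext n _ (fun t => if subb n t (fun i => A (S i)) then INR (cnt n (fun i => nth i t false && B (S i))) * lam ^ sz n t else 0))
     by (intros s; rewrite subb_S, sz_S, cnt_S; reflexivity).
   destruct (A 0%nat) eqn:EA.
   + rewrite (SumS_ext n (fun s => if subb (S n) (true :: s) A then INR (cnt (S n) (fun i => nth i (true::s) false && B i)) * lam ^ sz (S n) (true :: s) else 0) (fun t => lam * (if B 0%nat then 1 else 0) * (if subb n t (fun i => A (S i)) then lam ^ sz n t else 0)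
        + lam * (if subb n t (fun i => A (S i)) then INR (cnt n (fun i => nth i t false && B (S i))) * lam ^ sz n t else 0)))
      by (intros s; rewrite subb_S, sz_S, cnt_S, EA; simpl; destruct (subb _ _ _); [|lra];
          rewrite plus_INR; destruct (B 0%nat); simpl; lra).
     rewrite SumS_plus, SumS_scal, SumS_scal, S0.
     pose proof (IHn (fun i => A (S i)) (fun i => B (S i))) as IH.
     set (X := SumS n _) in *. simpl andb. rewrite plus_INR. simpl pow.
     destruct (B 0%nat); simpl INR;
     [ replace ((1+lam) * (X + (lam * 1 * (1 + lam) ^ cnt n (fun i => A (S i)) + lam * X))) with
        ((1+lam) * X * (1 + lam) + lam * 1 * (1 + lam) ^ cnt n (fun i => A (S i)) * (1+lam)) by ring
     | replace ((1+lam) * (X + (lam * 0 * (1 + lam) ^ cnt n (fun i => A (S i)) + lam * X))) with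
        ((1+lam) * X * (1 + lam)) by ring ];
     rewrite IH; ring.
   + rewrite (SumS_ext n (fun s => if subb (S n) (true :: s) A then INR (cnt (S n) (fun i => nth i (true::s) false && B i)) * lam ^ sz (S n) (true :: s) else 0) (fun t => 0)) by (intros s; rewrite subb_S, EA; reflexivity).
     rewrite SumS_zero. simpl andb. simpl pow. rewrite Rplus_0_r, IHn. simpl. lra. Qed.
End Lam.

Fixpoint orl (r t : list bool) : list bool :=
  match r, t with
  | a :: r', b :: t' => (a || b) :: orl r' t'
  | [], _ => t
  | _, [] => r
  end.
Lemma nth_orl i r t : nth i (orl r t) false = nth i r false || nth i t false.
Proof. revert i t; induction r; intros i t; simpl. - destruct i; auto.
 - destruct t; destruct i; simpl; rewrite ?orb_false_r; auto; destruct (nth i r false); auto. Qed.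

Lemma split_sum n (p : nat -> bool) f :
  SumS n f = SumS n (fun r => if subb n r (fun i => negb (p i)) then
                     SumS n (fun t => if subb n t p then f (orl r t) else 0) else 0).
Proof. revert p f; induction n; intros p f.
 - unfold SumS; simpl; ring.
 - rewrite SumS_S. rewrite (IHn (fun i => p (S i)) (fun s => f (false :: s))).
   rewrite (IHn (fun i => p (S i)) (fun s => f (true :: s))).
   rewrite SumS_S.
   destruct (p 0%nat) eqn:E.
   + rewrite (SumS_ext n (fun s => if subb (S n) (true :: s) (fun i => negb (p i)) then _ else 0) (fun _ => 0))
       by (intros s; rewrite subb_S, E; reflexivity).
     rewrite SumS_zero, Rplus_0_r, <- SumS_plus. apply SumS_ext; intros r.
     rewrite subb_S, E. simpl. destruct (subb n r _); [|lra]. rewrite SumS_S.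
     f_equal; apply SumS_ext; intros t; rewrite subb_S, E; reflexivity.
   + f_equal; apply SumS_ext; intros r; rewrite subb_S, E; simpl; destruct (subb n r _); try reflexivity;
     rewrite SumS_S;
     rewrite (SumS_ext n (fun s => if subb (S n) (true :: s) p then _ else 0) (fun _ => 0))
       by (intros s; rewrite subb_S, E; reflexivity);
     rewrite SumS_zero, Rplus_0_r; apply SumS_ext; intros t; rewrite subb_S, E; reflexivity.
Qed.


Lemma ind_spec n adj s : independentb n adj s = true <->
  (forall i j, (i < n)%nat -> (j < n)%nat -> nth i s false = true -> nth j s false = true -> adj i j = false).
Proof. unfold independentb. rewrite forallb_forall. split.
 - intros H i j Hi Hj Si Sj. assert (Hi' : In i (seq 0 n)) by (apply in_seq; lia).
   specialize (H i Hi'). rewrite forallb_forall in H.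
   assert (Hj' : In j (seq 0 n)) by (apply in_seq; lia). specialize (H j Hj').
   rewrite Si, Sj in H. destruct (adj i j); auto.
 - intros H i Hi. rewrite forallb_forall. intros j Hj. rewrite in_seq in Hi, Hj.
   destruct (nth i s false) eqn:Si, (nth j s false) eqn:Sj; simpl; auto.
   rewrite (H i j); auto; lia. Qed.

Section Vertex.
Variables (n : nat) (adj : nat -> nat -> bool) (v : nat).
Hypothesis Hsimple : is_simple_graph n adj.
Hypothesis Htf : triangle_free n adj.
Hypothesis Hv : (v < n)%nat.

Definition pv i := ((i =? v)%nat || adj v i).
Definition npv i := negb (pv i).
Definition Uv (r : list bool) i := adj v i && forallb (fun x => negb (nth x r false && adj i x)) (seq 0 n).
Definition ev i := (i =? v)%nat.
Definition ind s := independentb n adj s.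

Lemma Uv_spec r i : Uv r i = true <-> adj v i = true /\ (forall x, (x < n)%nat -> nth x r false = true -> adj i x = false).
Proof. unfold Uv. rewrite andb_true_iff, forallb_forall. split; intros [H1 H2]; split; auto.
 - intros x Hx Rx. assert (In x (seq 0 n)) by (apply in_seq; lia). specialize (H2 x H).
   rewrite Rx in H2. destruct (adj i x); auto.
 - intros x Hx. rewrite in_seq in Hx. destruct (nth x r false) eqn:Rx; simpl; auto.
   rewrite H2; auto; lia. Qed.

Lemma key r t : subb n r npv = true -> subb n t pv = true ->
  (ind (orl r t) = true <-> ind r = true /\ (subb n t (Uv r) = true \/ (subb n t ev = true /\ nth v t false = true))).
Proof. intros Hr Ht. destruct Hsimple as [Hsym Hirr].
 rewrite subb_spec in Hr, Ht. unfold ind. rewrite !ind_spec, !subb_spec.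
 unfold npv, pv, ev in *.
 split.
 - intros H. split.
   + intros i j Hi Hj Ri Rj. apply H; auto; rewrite nth_orl; [rewrite Ri|rewrite Rj]; auto.
   + destruct (nth v t false) eqn:Tv.
     * right. split; auto. intros i Hi Ti. specialize (Ht i Hi Ti).
       destruct (i =? v)%nat eqn:Eiv; auto. simpl in Ht.
       exfalso. assert (adj v i = false). { apply H; auto; rewrite nth_orl; [rewrite Tv|rewrite Ti]; apply orb_true_r. }
       congruence.
     * left. intros i Hi Ti. specialize (Ht i Hi Ti). apply Uv_spec.
       destruct (i =? v)%nat eqn:Eiv.
       { apply Nat.eqb_eq in Eiv. subst. congruence. }
       simpl in Ht. split; auto. intros x Hx Rx. apply H; auto; rewrite nth_orl; [rewrite Ti; apply orb_true_r|rewrite Rx; auto].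
 - intros [Hind [HU | [He HTv]]] i j Hi Hj Si Sj; rewrite nth_orl in Si, Sj.
   + apply orb_true_iff in Si, Sj.
     destruct Si as [Ri|Ti], Sj as [Rj|Tj].
     * apply Hind; auto.
     * pose proof (HU j Hj Tj) as Uj. apply Uv_spec in Uj. destruct Uj as [_ Uj]. rewrite Hsym; auto.
     * pose proof (HU i Hi Ti) as Ui. apply Uv_spec in Ui. destruct Ui as [_ Ui]. auto.
     * pose proof (HU i Hi Ti) as Ui. pose proof (HU j Hj Tj) as Uj.
       apply Uv_spec in Ui, Uj. destruct Ui as [Ai _], Uj as [Aj _].
       destruct (adj i j) eqn:Aij; auto. exfalso. apply (Htf v i j); auto.
   + apply orb_true_iff in Si, Sj.
     destruct Si as [Ri|Ti], Sj as [Rj|Tj].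
     * apply Hind; auto.
     * pose proof (He j Hj Tj) as Ej. apply Nat.eqb_eq in Ej; subst.
       pose proof (Hr i Hi Ri) as Ri'. rewrite Hsym; auto.
       destruct (adj v i); auto. rewrite orb_true_r in Ri'. discriminate.
     * pose proof (He i Hi Ti) as Ei. apply Nat.eqb_eq in Ei; subst.
       pose proof (Hr j Hj Rj) as Rj'. destruct (adj v j); auto. rewrite orb_true_r in Rj'. discriminate.
     * pose proof (He i Hi Ti) as Ei. pose proof (He j Hj Tj) as Ej.
       apply Nat.eqb_eq in Ei, Ej; subst. auto.
Qed.

Lemma subb_mono t A B : (forall i, (i < n)%nat -> A i = true -> B i = true) -> subb n t A = true -> subb n t B = true.
Proof. rewrite !subb_spec. intros H1 H2 i Hi Ti. apply H1; auto. Qed.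

Lemma Uv_not_v r t : subb n t (Uv r) = true -> nth v t false = false.
Proof. intros H. rewrite subb_spec in H. destruct (nth v t false) eqn:E; auto.
 specialize (H v Hv E). apply Uv_spec in H. destruct H as [H _]. destruct Hsimple as [_ Hirr].
 rewrite Hirr in H; auto. Qed.

Lemma key_bool r t : subb n r npv = true -> subb n t pv = true ->
  ind (orl r t) = ind r && (subb n t (Uv r) || (subb n t ev && nth v t false)).
Proof. intros Hr Ht. apply eq_iff_eq_true. rewrite key; auto.
 rewrite andb_true_iff, orb_true_iff, andb_true_iff. tauto. Qed.

Lemma sz_orl r t : subb n r npv = true -> subb n t pv = true -> sz n (orl r t) = (sz n r + sz n t)%nat.
Proof. intros Hr Ht. unfold sz. rewrite (cnt_ext n _ (fun i => nth i r false || nth i t false))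
  by (intros; apply nth_orl). apply cnt_or. intros i Hi.
 rewrite subb_spec in Hr, Ht. destruct (nth i r false) eqn:Ri, (nth i t false) eqn:Ti; auto.
 specialize (Hr i Hi Ri). specialize (Ht i Hi Ti). unfold npv in Hr. rewrite Ht in Hr. discriminate. Qed.

Section Lam.
Variable lam : R.
Definition w s := if ind s then lam ^ sz n s else 0.
Definition base r := if subb n r npv then (if ind r then lam ^ sz n r else 0) else 0.

Lemma inner (g g' : list bool -> R) r : subb n r npv = true ->
  (forall t, subb n t pv = true -> g (orl r t) = g' t) ->
  SumS n (fun t => if subb n t pv then w (orl r t) * g (orl r t) else 0) =
  (if ind r then lam ^ sz n r else 0) *
  (SumS n (fun t => if subb n t (Uv r) then lam ^ sz n t * g' t else 0) +
   SumS n (fun t => if subb n t ev then (if nth v t false then 1 else 0) * lam ^ sz n t * g' t else 0)).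
Proof. intros Hr Hg. rewrite <- SumS_plus, <- SumS_scal. apply SumS_ext. intros t.
 destruct (subb n t pv) eqn:Ht.
 - rewrite Hg by auto. unfold w. rewrite key_bool, sz_orl by auto. rewrite pow_add.
   destruct (subb n t (Uv r)) eqn:Ha.
   + rewrite (Uv_not_v r t Ha). destruct (ind r); simpl; [|ring].
     destruct (subb n t ev); simpl; ring.
   + destruct (ind r); simpl; [|ring]. destruct (subb n t ev), (nth v t false); simpl; ring.
 - assert (subb n t (Uv r) = false).
   { destruct (subb n t (Uv r)) eqn:E; auto. rewrite <- Ht. symmetry. apply (subb_mono t (Uv r)); auto.
     intros i Hi Ui. apply Uv_spec in Ui. unfold pv. destruct Ui as [-> _]. apply orb_true_r. }
   assert (subb n t ev = false).
   { destruct (subb n t ev) eqn:E; auto. rewrite <- Ht. symmetry. apply (subb_mono t ev); auto.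
     intros i Hi Ui. unfold pv. unfold ev in Ui. rewrite Ui. auto. }
   rewrite H, H0. ring. Qed.
End Lam.
End Vertex.


Section Vertex2.
Variables (n : nat) (adj : nat -> nat -> bool) (v : nat).
Hypothesis Hsimple : is_simple_graph n adj.
Hypothesis Htf : triangle_free n adj.
Hypothesis Hv : (v < n)%nat.
Variable lam : R.
Hypothesis Hlam : 0 < lam.

Definition Y r := cnt n (Uv n adj v r).
Notation Bs := (base n adj v lam).

Lemma tv_cnt t : (if nth v t false then 1 else 0) = INR (cnt n (fun i => nth i t false && ev v i)).
Proof. unfold ev. rewrite cnt_single by auto. destruct (nth v t false); simpl; lra. Qed.

Lemma cnt_ev : cnt n (ev v) = 1%nat.
Proof. rewrite (cnt_ext n _ (fun i => true && ev v i)) by auto. unfold ev. rewrite cnt_single; auto. Qed.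

Lemma cnt_sev P : cnt n (fun i => P i && ev v i) = if P v then 1%nat else 0%nat.
Proof. unfold ev. apply cnt_single; auto. Qed.

Lemma E2 : SumS n (fun t => if subb n t (ev v) then (if nth v t false then 1 else 0) * lam ^ sz n t else 0) = lam.
Proof. pose proof (S1 lam n (ev v) (ev v)) as H.
 rewrite (cnt_ext n (fun i => ev v i && ev v i) (fun i => true && ev v i)) in H
   by (intros; destruct (ev v i); auto).
 rewrite cnt_sev, cnt_ev in H. replace (ev v v) with true in H by (unfold ev; rewrite Nat.eqb_refl; auto).
 rewrite (SumS_ext n _ (fun t => if subb n t (ev v) then (if nth v t false then 1 else 0) * lam ^ sz n t else 0)) in H
   by (intros t; rewrite tv_cnt; reflexivity).
 simpl in H. apply Rmult_eq_reg_l with (1 + lam); [|lra]. rewrite H. ring. Qed.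

Lemma E3 r : SumS n (fun t => if subb n t (Uv n adj v r) then (if nth v t false then 1 else 0) * lam ^ sz n t else 0) = 0.
Proof. pose proof (S1 lam n (Uv n adj v r) (ev v)) as H.
 rewrite cnt_sev in H.
 assert (HU : Uv n adj v r v = false).
 { destruct (Uv n adj v r v) eqn:E; auto. apply Uv_spec in E. destruct E as [E _].
   destruct Hsimple as [_ Hirr]. rewrite (Hirr v Hv) in E. all: try discriminate; auto. }
 rewrite HU in H.
 rewrite (SumS_ext n _ (fun t => if subb n t (Uv n adj v r) then (if nth v t false then 1 else 0) * lam ^ sz n t else 0)) in H
   by (intros t; rewrite tv_cnt; reflexivity).
 simpl in H. apply Rmult_eq_reg_l with (1 + lam); [|lra]. rewrite H. ring. Qed.

Lemma E5 r : (1 + lam) * SumS n (fun t => if subb n t (Uv n adj v r) then INR (cnt n (fun i => nth i t false && adj v i)) * lam ^ sz n t else 0)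
  = INR (Y r) * lam * (1 + lam) ^ (Y r).
Proof. rewrite S1. unfold Y. f_equal. f_equal. f_equal. apply cnt_ext. intros i Hi.
 destruct (Uv n adj v r i) eqn:E; auto. simpl. apply Uv_spec in E. all: tauto. Qed.

Lemma per_vertex (g g' : list bool -> R) :
  (forall r t, subb n r (npv adj v) = true -> subb n t (pv adj v) = true -> g (orl r t) = g' t) ->
  SumS n (fun s => w n adj lam s * g s) =
  SumS n (fun r => Bs r *
  (SumS n (fun t => if subb n t (Uv n adj v r) then lam ^ sz n t * g' t else 0) +
   SumS n (fun t => if subb n t (ev v) then (if nth v t false then 1 else 0) * lam ^ sz n t * g' t else 0))).
Proof. intros Hg. rewrite (split_sum n (pv adj v)). apply SumS_ext. intros r. unfold base.
 change (fun i => negb (pv adj v i)) with (npv adj v).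
 destruct (subb n r (npv adj v)) eqn:Hr; [|ring].
 apply inner; auto. Qed.

Lemma Zv : SumS n (w n adj lam) = SumS n (fun r => Bs r * ((1 + lam) ^ (Y r) + lam)).
Proof. rewrite (SumS_ext n (w n adj lam) (fun s => w n adj lam s * 1)) by (intros; ring).
 rewrite (per_vertex (fun _ => 1) (fun _ => 1)) by auto. apply SumS_ext. intros r.
 f_equal. unfold Y. f_equal.
 - rewrite <- (S0 lam n). apply SumS_ext. intros t. destruct (subb _ _ _); ring.
 - etransitivity; [|apply E2]. apply SumS_ext. intros t. destruct (subb _ _ _); ring. Qed.

Lemma Av : SumS n (fun s => w n adj lam s * (if nth v s false then 1 else 0)) = SumS n (fun r => Bs r * lam).
Proof. rewrite (per_vertex _ (fun t => if nth v t false then 1 else 0)).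
 - apply SumS_ext. intros r. f_equal.
   assert (HX : SumS n (fun t => if subb n t (Uv n adj v r) then lam ^ sz n t * (if nth v t false then 1 else 0) else 0) = 0).
   { etransitivity; [|apply (E3 r)]. apply SumS_ext. intros t. destruct (subb _ _ _); ring. }
   rewrite HX, Rplus_0_l.
   etransitivity; [|apply E2]. apply SumS_ext. intros t. destruct (subb _ _ _), (nth v t false); ring.
 - intros r t Hr Ht. rewrite nth_orl. rewrite subb_spec in Hr. destruct (nth v r false) eqn:E; auto.
   specialize (Hr v Hv E). unfold npv, pv in Hr. rewrite Nat.eqb_refl in Hr. discriminate.
Qed.

Lemma Bv : SumS n (fun s => w n adj lam s * INR (cnt n (fun i => nth i s false && adj v i))) =
  SumS n (fun r => Bs r * (INR (Y r) * lam * (1 + lam) ^ (Y r) / (1 + lam))).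
Proof. rewrite (per_vertex _ (fun t => INR (cnt n (fun i => nth i t false && adj v i)))).
 - apply SumS_ext. intros r. f_equal.
   rewrite (SumS_ext n (fun t => if subb n t (ev v) then _ else 0) (fun _ => 0)).
   + rewrite SumS_zero, Rplus_0_r. rewrite <- (E5 r). field_simplify; [|lra].
     apply SumS_ext. intros t. destruct (subb _ _ _); ring.
   + intros t. destruct (subb n t (ev v)) eqn:He; auto.
     rewrite (cnt_ext n _ (fun _ => false)). { rewrite cnt_false. simpl. ring. }
     intros i Hi. rewrite subb_spec in He. destruct (nth i t false) eqn:Ti; auto.
     specialize (He i Hi Ti). unfold ev in He. apply Nat.eqb_eq in He. subst.
     destruct Hsimple as [_ Hirr]. rewrite Hirr; auto.
 - intros r t Hr Ht. f_equal. apply cnt_ext. intros i Hi. rewrite nth_orl.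
   rewrite subb_spec in Hr. destruct (nth i r false) eqn:E; auto.
   specialize (Hr i Hi E). unfold npv, pv in Hr. destruct (adj v i); auto.
   rewrite orb_true_r in Hr. discriminate.
 rewrite !andb_false_r; auto. Qed.
End Vertex2.


Lemma div_le a b c : 0 < a -> b <= c * a -> b / a <= c.
Proof. intros Ha H. unfold Rdiv. apply Rmult_le_reg_r with a; auto.
 rewrite Rmult_assoc, Rinv_l, Rmult_1_r by lra. exact H. Qed.

Lemma bernoulli lam k : 0 <= lam -> 1 + lam * INR k <= (1 + lam) ^ k.
Proof. intros H. induction k; [simpl; lra|]. rewrite S_INR. simpl pow.
 assert (0 <= lam * INR k) by (apply Rmult_le_pos; auto; apply pos_INR). nra. Qed.

Lemma exp_pow lam k : 0 < lam -> exp (- (ln (1 + lam) * INR k)) = / (1 + lam) ^ k.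
Proof. intros H. rewrite exp_Ropp. f_equal. rewrite Rmult_comm, <- ln_pow by lra.
 apply exp_ln. apply pow_lt; lra. Qed.

Lemma exp_tangent x a : exp a * (1 + (x - a)) <= exp x.
Proof. replace x with (a + (x - a)) at 2 by ring. rewrite exp_plus.
 apply Rmult_le_compat_l. { left; apply exp_pos. } apply exp_ineq1_le. Qed.

Lemma lsum_const {A} (l : list A) c : lsum l (fun _ => c) = INR (length l) * c.
Proof. induction l; simpl length; [simpl; ring|]. rewrite S_INR. simpl. rewrite IHl. ring. Qed.

Lemma lsum_nonneg {A} (l : list A) f : (forall x, In x l -> 0 <= f x) -> 0 <= lsum l f.
Proof. intros H. rewrite <- (lsum_zero l). apply lsum_le. auto. Qed.

Section Global.
Variables (n : nat) (adj : nat -> nat -> bool) (d : nat).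
Hypothesis Hsimple : is_simple_graph n adj.
Hypothesis Htf : triangle_free n adj.
Hypothesis Hdeg : forall v, (v < n)%nat -> (degree n adj v <= d)%nat.
Hypothesis Hn : (0 < n)%nat.
Variable lam : R.
Hypothesis Hlam : 0 < lam.

Let V := seq 0 n.
Let W := w n adj lam.
Definition Zs := SumS n W.
Definition S1s := SumS n (fun s => W s * INR (sz n s)).
Definition Dsum (h : nat -> list bool -> R) := lsum V (fun v => SumS n (fun r => h v r)).

Lemma Dsum_plus h1 h2 : Dsum (fun v r => h1 v r + h2 v r) = Dsum h1 + Dsum h2.
Proof. unfold Dsum. rewrite <- lsum_plus. apply lsum_ext_in. intros; apply SumS_plus. Qed.
Lemma Dsum_scal h c : Dsum (fun v r => c * h v r) = c * Dsum h.
Proof. unfold Dsum. rewrite <- lsum_scal. apply lsum_ext_in. intros; apply SumS_scal. Qed.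
Lemma Dsum_le h1 h2 : (forall v r, (v < n)%nat -> h1 v r <= h2 v r) -> Dsum h1 <= Dsum h2.
Proof. intros H. unfold Dsum. apply lsum_le. intros v Hv. apply in_seq in Hv. apply lsum_le.
 intros; apply H; lia. Qed.

Lemma W_nonneg s : 0 <= W s.
Proof. unfold W, w. destruct (ind n adj s); [apply pow_le; lra| lra]. Qed.

Lemma base_nonneg v r : 0 <= base n adj v lam r.
Proof. unfold base. destruct (subb _ _ _); [|lra]. destruct (ind n adj r); [apply pow_le; lra| lra]. Qed.

Definition om v r := base n adj v lam r * ((1 + lam) ^ (Y n adj v r) + lam).

Lemma Omega : Dsum om = INR n * Zs.
Proof. unfold Dsum. rewrite (lsum_ext_in V _ (fun _ => Zs)).
 - rewrite lsum_const. unfold V. rewrite length_seq. reflexivity.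
 - intros v Hv. apply in_seq in Hv. unfold Zs, W, om. symmetry. apply Zv; auto; lia. Qed.

Lemma S1_eq : S1s = Dsum (fun v r => base n adj v lam r * lam).
Proof. unfold S1s, Dsum.
 rewrite (lsum_ext_in V _ (fun v => SumS n (fun s => W s * (if nth v s false then 1 else 0)))).
 2:{ intros v Hv. apply in_seq in Hv. symmetry. apply Av; auto; lia. }
 unfold SumS. rewrite <- lsum_swap. apply lsum_ext_in. intros s _.
 unfold sz. rewrite cnt_INR, <- lsum_scal. reflexivity. Qed.

Lemma degsum : Dsum (fun v r => base n adj v lam r * (INR (Y n adj v r) * lam * (1 + lam) ^ (Y n adj v r) / (1 + lam)))
  <= INR d * S1s.
Proof. unfold Dsum.
 rewrite (lsum_ext_in V _ (fun v => SumS n (fun s => W s * INR (cnt n (fun i => nth i s false && adj v i))))).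
 2:{ intros v Hv. apply in_seq in Hv. symmetry. apply Bv; auto; lia. }
 unfold S1s, SumS. rewrite <- lsum_swap, <- lsum_scal. apply lsum_le. intros s _.
 rewrite lsum_scal. replace (INR d * (W s * INR (sz n s))) with (W s * (INR d * INR (sz n s))) by ring.
 apply Rmult_le_compat_l; [apply W_nonneg|].
 rewrite (lsum_ext_in V _ (fun v => lsum V (fun i => if nth i s false && adj v i then 1 else 0)))
   by (intros; apply cnt_INR).
 rewrite lsum_swap. unfold sz. rewrite cnt_INR, <- lsum_scal. apply lsum_le.
 intros i Hi. destruct (nth i s false) eqn:Si; simpl.
 - rewrite Rmult_1_r. apply in_seq in Hi.
   rewrite (lsum_ext_in V _ (fun v => if adj i v then 1 else 0)).
   + unfold V. rewrite <- cnt_INR. apply le_INR. apply (Hdeg i). lia.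
   + intros v Hv. apply in_seq in Hv. destruct Hsimple as [Hsym _]. rewrite Hsym by lia. reflexivity.
 - rewrite lsum_zero. lra. Qed.

Lemma Dsum_ext h1 h2 : (forall v r, h1 v r = h2 v r) -> Dsum h1 = Dsum h2.
Proof. intros H. unfold Dsum. apply lsum_ext_in. intros; apply SumS_ext; auto. Qed.

Definition Qs := Dsum (fun v r => om v r * INR (Y n adj v r)).

Lemma boundA : let c := lam / (1 + lam) in let L := ln (1 + lam) in
  forall M, S1s >= c * exp (- (L * M)) * (1 + L * M) * Dsum om - c * exp (- (L * M)) * L * Qs.
Proof. intros c L M. rewrite S1_eq. apply Rle_ge.
 apply Rle_trans with (Dsum (fun v r => c * om v r * exp (- (L * INR (Y n adj v r))))).
 - unfold Qs. rewrite <- !Dsum_scal. unfold Rminus. rewrite <- (Rmult_1_l (Dsum (fun v r => _ * (om v r * _)))).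
   rewrite (Ropp_mult_distr_l 1), <- Dsum_scal, <- Dsum_plus. apply Dsum_le. intros v r _.
   pose proof (exp_tangent (- (L * INR (Y n adj v r))) (- (L * M))).
   assert (0 <= c * om v r).
   { unfold c, om. apply Rmult_le_pos. { apply Rmult_le_pos; [lra| left; apply Rinv_0_lt_compat; lra]. }
     apply Rmult_le_pos; [apply base_nonneg|]. pose proof (pow_le (1+lam) (Y n adj v r)). lra. }
   apply Rle_trans with (c * om v r * (exp (- (L * M)) * (1 + (- (L * INR (Y n adj v r)) - - (L * M))))).
   + right. ring.
   + apply Rmult_le_compat_l; auto.
 - apply Dsum_le. intros v r _. unfold om. set (P := (1 + lam) ^ Y n adj v r).
   assert (HP : 1 <= P). { unfold P. pose proof (bernoulli lam (Y n adj v r)). pose proof (pos_INR (Y n adj v r)). nra. }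
   unfold L. rewrite exp_pow by auto. fold P.
   pose proof (base_nonneg v r) as Hb.
   replace (c * (base n adj v lam r * (P + lam)) * / P) with (base n adj v lam r * (lam * (P + lam) / ((1 + lam) * P))).
   2:{ unfold c. field. lra. }
   apply Rmult_le_compat_l; auto. apply div_le; [nra|]. nra.
Qed.

Lemma boundB : let c := lam / (1 + lam) in INR d * S1s >= c * (Qs - Dsum om).
Proof. intros c. apply Rle_ge. eapply Rle_trans; [|apply degsum].
 unfold Qs. unfold Rminus. rewrite <- (Rmult_1_l (Dsum om)), (Ropp_mult_distr_l 1), <- Dsum_scal, <- Dsum_plus, <- Dsum_scal.
 apply Dsum_le. intros v r _. unfold om. set (P := (1 + lam) ^ Y n adj v r). set (k := INR (Y n adj v r)).
 assert (HP : 1 + lam * k <= P). { apply bernoulli; lra. }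
 pose proof (base_nonneg v r) as Hb.
 replace (c * (base n adj v lam r * (P + lam) * k + - (1) * (base n adj v lam r * (P + lam))))
   with (base n adj v lam r * (lam * ((P + lam) * (k - 1)) / (1 + lam))) by (unfold c; field; lra).
 apply Rmult_le_compat_l; auto. unfold Rdiv. apply Rmult_le_compat_r; [left; apply Rinv_0_lt_compat; lra|].
 nra.
Qed.
End Global.


Lemma exp_le x y : x <= y -> exp x <= exp y.
Proof. intros [H|H]; [left; apply exp_increasing; auto| subst; lra]. Qed.

Lemma ln_ge x T : 0 < x -> exp T <= x -> T <= ln x.
Proof. intros Hx H. destruct (Rle_lt_dec T (ln x)) as [|Hl]; auto.
 apply exp_increasing in Hl. rewrite exp_ln in Hl by auto. lra. Qed.

Lemma ln_1p_le lam : 0 < lam -> ln (1 + lam) <= lam.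
Proof. intros H. apply Rle_trans with (ln (exp lam)).
 - destruct (Rle_lt_dec (ln (1+lam)) (ln (exp lam))) as [|Hl]; auto.
   apply exp_increasing in Hl. rewrite !exp_ln in Hl by (try apply exp_pos; lra).
   pose proof (exp_ineq1_le lam). lra.
 - rewrite ln_exp. lra. Qed.

Lemma ln_1p_pos lam : 0 < lam -> 0 < ln (1 + lam).
Proof. intros H. rewrite <- ln_1. apply ln_increasing; lra. Qed.

Lemma div_le_helper a b c : 0 < a -> b <= c * a -> b / a <= c.
Proof. intros Ha H. unfold Rdiv. apply Rmult_le_reg_r with a; auto.
 rewrite Rmult_assoc, Rinv_l, Rmult_1_r by lra. exact H. Qed.

Lemma numeric eps : 0 < eps <= 1/2 ->
  let lam := eps / 2 in let c := lam / (1 + lam) in let L := ln (1 + lam) in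
  exists d0 : nat, (1 <= d0)%nat /\ forall d : nat, (d0 <= d)%nat ->
  forall a M nn : R, 0 <= nn -> a >= c * nn * exp (- (L * M)) -> INR d * a >= c * nn * (M - 1) ->
  a >= (1 - eps) * (ln (INR d) / INR d) * nn.
Proof. intros Heps lam c L.
 assert (Hlam : 0 < lam) by (unfold lam; lra).
 assert (Hc : 0 < c) by (unfold c; apply Rdiv_lt_0_compat; lra).
 assert (HL : 0 < L) by (apply ln_1p_pos; auto).
 assert (HLl : L <= lam) by (apply ln_1p_le; auto).
 set (dl := eps / 2).
 set (K := 2 * (1 + lam) / (c * dl)).
 destruct (INR_unbounded (exp (2 * K / dl))) as [N HN].
 exists (S N). split; [lia|]. intros d Hd a M nn Hnn HA HB.
 assert (Hd1 : 1 <= INR d) by (apply (le_INR 1); lia).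
 assert (HdN : INR N <= INR d) by (apply le_INR; lia).
 set (x := ln (INR d)).
 assert (Hx0 : 0 <= x) by (unfold x; apply ln_ge; [lra|]; rewrite exp_0; lra).
 assert (Hdx : INR d = exp x) by (unfold x; rewrite exp_ln; lra).
 assert (HxK : 2 * K / dl <= x) by (apply ln_ge; lra).
 fold x.
 assert (Hdpos : 0 < INR d) by lra.
 assert (Hgoal : forall b, b <= INR d * a -> (1 - eps) * x * nn <= b -> a >= (1 - eps) * (x / INR d) * nn).
 { intros b H1 H2. apply Rle_ge.
   replace ((1 - eps) * (x / INR d) * nn) with (((1 - eps) * x * nn) * / INR d) by (field; lra).
   replace a with ((INR d * a) * / INR d) by (field; lra).
   apply Rmult_le_compat_r; [left; apply Rinv_0_lt_compat; lra| lra]. }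
 destruct (Rle_lt_dec ((1 - eps) * x) (c * (M - 1))) as [Hcase|Hcase].
 - apply (Hgoal (c * nn * (M - 1))); [lra|]. 
   replace (c * nn * (M - 1)) with (c * (M - 1) * nn) by ring. apply Rmult_le_compat_r; lra.
 - assert (HM : M <= 1 + (1 - eps) * x / c).
   { apply Rmult_le_reg_l with c; auto. replace (c * (1 + (1 - eps) * x / c)) with (c + (1 - eps) * x) by (field; lra). lra. }
   assert (Hq : L * (1 - eps) / c <= 1 - dl).
   { replace (L * (1 - eps) / c) with (L * (1 + lam) * (1 - eps) / lam) by (unfold c; field; lra).
     apply div_le_helper; [lra|]. unfold dl, lam in *. nra. }
   assert (He1 : exp (- (L + (1 - dl) * x)) <= exp (- (L * M))).
   { apply exp_le. apply Ropp_le_contravar.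
     apply Rle_trans with (L * (1 + (1 - eps) * x / c)). { apply Rmult_le_compat_l; lra. }
     replace (L * (1 + (1 - eps) * x / c)) with (L + (L * (1 - eps) / c) * x) by (field; lra).
     assert ((L * (1 - eps) / c) * x <= (1 - dl) * x) by (apply Rmult_le_compat_r; lra). lra. }
   assert (He2 : exp (- (L + (1 - dl) * x)) = / (1 + lam) * exp (dl * x) * / INR d).
   { replace (- (L + (1 - dl) * x)) with ((- L + dl * x) + - x) by ring.
     rewrite !exp_plus, !exp_Ropp. unfold L. rewrite exp_ln by lra. rewrite Hdx. ring. }
   assert (Hy : x * (1 + lam) / c <= exp (dl * x)).
   { set (y := dl * x / 2).
     assert (HyK : K <= y). { unfold y. apply Rmult_le_reg_l with (2 / dl). { unfold dl; apply Rdiv_lt_0_compat; lra. }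
       replace (2 / dl * (dl * x / 2)) with x by (field; unfold dl; lra).
       replace (2 / dl * K) with (2 * K / dl) by (field; unfold dl; lra). lra. }
     assert (HK : 0 < K) by (unfold K; apply Rdiv_lt_0_compat; [lra| apply Rmult_lt_0_compat; unfold dl; lra]).
     pose proof (exp_ineq1_le y).
     replace (dl * x) with (y + y) by (unfold y; field). rewrite exp_plus.
     apply Rle_trans with (y * K).
     - right. unfold y, K. field. split; [unfold dl; lra| lra].
     - apply Rmult_le_compat; lra. }
   apply (Hgoal (INR d * (c * nn * exp (- (L * M))))). { apply Rmult_le_compat_l; lra. }
   apply Rle_trans with (INR d * (c * nn * (/ (1 + lam) * exp (dl * x) * / INR d))).
   + replace (INR d * (c * nn * (/ (1 + lam) * exp (dl * x) * / INR d))) with ((c / (1 + lam) * exp (dl * x)) * nn) by (field; lra).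
     apply Rmult_le_compat_r; auto.
     apply Rle_trans with x. { assert (0 <= eps * x) by nra. nra. }
     apply Rmult_le_reg_l with ((1 + lam) / c). { apply Rdiv_lt_0_compat; lra. }
     replace ((1 + lam) / c * (c / (1 + lam) * exp (dl * x))) with (exp (dl * x)) by (field; lra).
     replace ((1 + lam) / c * x) with (x * (1 + lam) / c) by (field; lra). lra.
   + apply Rmult_le_compat_l; [lra|]. apply Rmult_le_compat_l; [nra|]. lra.
Qed.


Lemma pow_le1 lam k : 0 <= lam <= 1 -> lam ^ k <= 1.
Proof. intros H. rewrite <- (pow1 k). apply pow_incr. lra. Qed.

Lemma powdiff lam a b : 0 < lam <= 1 -> 0 <= (INR a - INR b) * (lam ^ b - lam ^ a).
Proof. intros H. destruct (Nat.le_ge_cases a b) as [Hab|Hab].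
 - replace b with (a + (b - a))%nat by lia. rewrite pow_add, plus_INR.
   pose proof (pow_le1 lam (b - a) ltac:(lra)). pose proof (pow_le lam a ltac:(lra)).
   pose proof (pos_INR (b - a)).
   replace ((INR a - (INR a + INR (b - a))) * (lam ^ a * lam ^ (b - a) - lam ^ a)) with
     (INR (b - a) * lam ^ a * (1 - lam ^ (b - a))) by ring.
   apply Rmult_le_pos; [apply Rmult_le_pos|]; lra.
 - replace a with (b + (a - b))%nat by lia. rewrite pow_add, plus_INR.
   pose proof (pow_le1 lam (a - b) ltac:(lra)). pose proof (pow_le lam b ltac:(lra)).
   pose proof (pos_INR (a - b)).
   replace ((INR b + INR (a - b) - INR b) * (lam ^ b - lam ^ b * lam ^ (a - b))) with
     (INR (a - b) * lam ^ b * (1 - lam ^ (a - b))) by ring.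
   apply Rmult_le_pos; [apply Rmult_le_pos|]; lra. Qed.

Lemma all_subsets_length n s : In s (all_subsets n) -> length s = n.
Proof. revert s; induction n; simpl; intros s H.
 - destruct H as [<-|[]]; auto.
 - apply in_app_iff in H. destruct H as [H|H]; apply in_map_iff in H; destruct H as [t [<- Ht]]; simpl; auto. Qed.

Lemma repeat_in n : In (repeat false n) (all_subsets n).
Proof. induction n; simpl; auto. apply in_app_iff. left. apply in_map. auto. Qed.

Lemma set_size_cnt s : set_size s = cnt (length s) (fun i => nth i s false).
Proof. induction s; auto. simpl length. rewrite cnt_S. unfold set_size in *. simpl.
 rewrite IHs. destruct a; simpl; auto. Qed.

Lemma fold_filter_INR (g : list bool -> nat) p l :
  INR (fold_right Nat.add 0%nat (map g (filter p l))) = lsum l (fun s => if p s then INR (g s) else 0).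
Proof. induction l; simpl; auto. destruct (p a); simpl; rewrite ?plus_INR, IHl; ring. Qed.

Lemma length_filter_INR p (l : list (list bool)) :
  INR (length (filter p l)) = lsum l (fun s => if p s then 1 else 0).
Proof. induction l; simpl; auto. destruct (p a); simpl length; rewrite ?S_INR, IHl; ring. Qed.

Lemma lsum_minus {A} (l : list A) f g : lsum l (fun x => f x - g x) = lsum l f - lsum l g.
Proof. induction l; simpl; lra. Qed.

Section Mono.
Variables (n : nat) (adj : nat -> nat -> bool) (lam : R).
Hypothesis Hlam : 0 < lam <= 1.
Definition A1 := SumS n (fun s => if ind n adj s then INR (sz n s) else 0).
Definition N1 := SumS n (fun s => if ind n adj s then 1 else 0).

Lemma ind_repeat : ind n adj (repeat false n) = true.
Proof. unfold ind. apply ind_spec. intros i j _ _ Hi. rewrite nth_repeat in Hi. discriminate. Qed.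

Lemma sz_repeat : sz n (repeat false n) = 0%nat.
Proof. unfold sz. rewrite (cnt_ext n _ (fun _ => false)) by (intros; apply nth_repeat). apply cnt_false. Qed.

Lemma N1_pos : 0 < N1.
Proof. eapply Rlt_le_trans; [|apply (lsum_ge_elem _ _ (repeat false n))].
 - cbv beta. rewrite ind_repeat. lra.
 - intros y _. destruct (ind n adj y); lra.
 - apply repeat_in. Qed.

Lemma Z_pos : 0 < Zs n adj lam.
Proof. unfold Zs. eapply Rlt_le_trans; [|apply (lsum_ge_elem _ _ (repeat false n))].
 - cbv beta. unfold w. rewrite ind_repeat, sz_repeat. simpl. lra.
 - intros y _. unfold w. destruct (ind n adj y); [apply pow_le; lra|lra].
 - apply repeat_in. Qed.

Lemma mono : S1s n adj lam / Zs n adj lam <= A1 / N1.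
Proof. pose proof N1_pos as HN. pose proof Z_pos as HZ.
 assert (H : N1 * S1s n adj lam <= A1 * Zs n adj lam).
 { unfold A1, N1, S1s, Zs, SumS. rewrite !lsum_mul.
   set (l := all_subsets n).
   set (F := fun s t => (if ind n adj s then INR (sz n s) else 0) * w n adj lam t
                       - (if ind n adj s then 1 else 0) * (w n adj lam t * INR (sz n t))).
   assert (H1 : 0 <= lsum l (fun s => lsum l (fun t => F s t))).
   { assert (Hsw : lsum l (fun s => lsum l (fun t => F s t)) = lsum l (fun s => lsum l (fun t => F t s))) by apply lsum_swap.
     assert (H1 : 0 <= lsum l (fun s => lsum l (fun t => F s t + F t s))).
     { apply lsum_nonneg. intros s _. apply lsum_nonneg. intros t _. unfold F, w.
       destruct (ind n adj s), (ind n adj t); try lra.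
       pose proof (powdiff lam (sz n s) (sz n t) Hlam). nra. }
     rewrite (lsum_ext_in l _ (fun s => lsum l (fun t => F s t) + lsum l (fun t => F t s))) in H1
       by (intros; apply lsum_plus).
     rewrite lsum_plus, <- Hsw in H1. lra. }
   unfold F in H1.
   rewrite (lsum_ext_in l _ (fun s => lsum l (fun t => (if ind n adj s then INR (sz n s) else 0) * w n adj lam t)
        - lsum l (fun t => (if ind n adj s then 1 else 0) * (w n adj lam t * INR (sz n t))))) in H1
     by (intros; apply lsum_minus).
   rewrite lsum_minus in H1. lra. }
 unfold Rdiv. apply Rmult_le_reg_r with (N1 * Zs n adj lam); [nra|].
 replace (S1s n adj lam * / Zs n adj lam * (N1 * Zs n adj lam)) with (N1 * S1s n adj lam) by (field; lra).
 replace (A1 * / N1 * (N1 * Zs n adj lam)) with (A1 * Zs n adj lam) by (field; lra). lra. Qed.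

Lemma avg_eq : avg_indep_size n adj = A1 / N1.
Proof. unfold avg_indep_size, indep_sets. rewrite fold_filter_INR, length_filter_INR.
 unfold A1, N1, SumS, ind. f_equal. apply lsum_ext_in. intros s Hs.
 rewrite set_size_cnt, (all_subsets_length n s Hs). reflexivity. Qed.
End Mono.


Theorem theorem1p1 :
  forall eps : R, 0 < eps ->
  exists d0 : nat,
  forall (d n : nat) (adj : nat -> nat -> bool),
    (d0 <= d)%nat ->
    is_simple_graph n adj ->
    triangle_free n adj ->
    max_degree n adj d ->
    avg_indep_size n adj >= (1 - eps) * (ln (INR d) / INR d) * INR n.
Proof.
 intros eps Heps. set (e := Rmin eps (1/2)).
 assert (He : 0 < e <= 1/2) by (unfold e; split; [apply Rmin_glb_lt; lra| apply Rmin_r]).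
 assert (Hee : e <= eps) by (unfold e; apply Rmin_l).
 destruct (numeric e He) as [d0 [Hd01 Hnum]].
 exists d0. intros d n adj Hd Hs Htf [Hdeg [v [Hv _]]].
 assert (Hn : (0 < n)%nat) by lia.
 set (lam := e / 2). assert (Hlam : 0 < lam) by (unfold lam; lra).
 set (c := lam / (1 + lam)). set (L := ln (1 + lam)).
 pose proof (Z_pos n adj lam ltac:(unfold lam; lra)) as HZ.
 pose proof (Omega n adj Hs Htf Hn lam Hlam) as HOm.
 set (Om := Dsum n (om n adj lam)) in *.
 assert (HOmp : 0 < Om) by (rewrite HOm; apply Rmult_lt_0_compat; [apply lt_0_INR; lia| auto]).
 set (M := Qs n adj lam / Om).
 pose proof (boundA n adj Hs Htf Hn lam Hlam M) as HA. cbv zeta in HA. fold c L in HA. fold Om in HA.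
 pose proof (boundB n adj d Hs Htf Hdeg Hn lam Hlam) as HB. cbv zeta in HB. fold c in HB. fold Om in HB.
 assert (HQ : Qs n adj lam = M * Om) by (unfold M; field; lra).
 rewrite HQ in HA, HB.
 set (a := S1s n adj lam / Zs n adj lam).
 assert (HS1 : S1s n adj lam = a * Zs n adj lam) by (unfold a; field; lra).
 rewrite HS1, HOm in HA. rewrite HS1, HOm in HB.
 assert (HA' : a >= c * INR n * exp (- (L * M))).
 { apply Rle_ge. apply Rmult_le_reg_r with (Zs n adj lam); auto. nra. }
 assert (HB' : INR d * a >= c * INR n * (M - 1)).
 { apply Rle_ge. apply Rmult_le_reg_r with (Zs n adj lam); auto. nra. }
 pose proof (Hnum d Hd a M (INR n) (pos_INR n) HA' HB') as Hfin.
 rewrite avg_eq. pose proof (mono n adj lam ltac:(unfold lam; lra)) as Hmono. fold a in Hmono.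
 assert (Hd1 : 1 <= INR d) by (apply (le_INR 1); lia).
 assert (0 <= ln (INR d) / INR d * INR n).
 { apply Rmult_le_pos; [|apply pos_INR]. unfold Rdiv; apply Rmult_le_pos; [|left; apply Rinv_0_lt_compat; lra].
   rewrite <- ln_1. destruct Hd1 as [Hd1|Hd1]; [left; apply ln_increasing; lra| rewrite Hd1; lra]. }
 apply Rle_ge. apply Rle_trans with a; [|auto].
 apply Rge_le in Hfin. eapply Rle_trans; [|exact Hfin].
 rewrite !Rmult_assoc. apply Rmult_le_compat_r; [auto| lra].
Qed.
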